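(* For all positive integers $i,j$ and nonnegative integers $k$ such that $(i-k-2)(j-k-2)\geq (k+1)^2$, we have $R_k^{\mathcal{SP}}(i,j)=i+j-1$, where $\mathcal{SP}$ is the class of split graphs.
   Context: All graphs are finite and simple. For a graph $G$ and a nonnegative integer $k$, a $k$-sparse $j$-set is a set of $j$ vertices of $G$ inducing a subgraph of maximum degree at most $k$; a $k$-dense $i$-set is a set of $i$ vertices of $G$ that is $k$-sparse in the complement of $G$. For a graph class $\mathcal{G}$, $R_k^{\mathcal{G}}(i,j)$ is the smallest natural number $n$ such that every graph on $n$ vertices in $\mathcal{G}$ has either a $k$-dense $i$-set or a $k$-sparse $j$-set. A split graph is a graph whose vertex set can be partitioned into a clique and an independent set. *)

(* Defs.v *)
From mathcomp Require Import all_boot all_order all_algebra.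
Set Implicit Arguments. Unset Strict Implicit. Unset Printing Implicit Defensive.

Definition simple_graph (T : finType) (e : rel T) : Prop :=
  irreflexive e /\ symmetric e.

Definition compl_graph (T : finType) (e : rel T) : rel T :=
  fun x y => (x != y) && ~~ e x y.

Definition split_graph (T : finType) (e : rel T) : Prop :=
  exists K : {set T},
    (forall x y, x \in K -> y \in K -> x != y -> e x y) /\
    (forall x y, x \in ~: K -> y \in ~: K -> ~~ e x y).

Definition k_sparse_set (T : finType) (e : rel T) (k : nat) (S : {set T}) : Prop :=
  forall x, x \in S -> #|[set y in S | e x y]| <= k.

Definition k_dense_set (T : finType) (e : rel T) (k : nat) (S : {set T}) : Prop :=
  k_sparse_set (compl_graph e) k S.

Definition ramsey_SP_prop (k i j n : nat) : Prop :=
  forall e : rel 'I_n, simple_graph e -> split_graph e ->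
    (exists S : {set 'I_n}, #|S| = i /\ k_dense_set e k S) \/
    (exists S : {set 'I_n}, #|S| = j /\ k_sparse_set e k S).

Definition is_ramsey_SP (k i j r : nat) : Prop :=
  ramsey_SP_prop k i j r /\ forall n, ramsey_SP_prop k i j n -> r <= n.

(* Main.v *)
Require Import Defs.
From mathcomp Require Import all_boot all_order all_algebra.
From mathcomp Require Import zify.
Import Order.TTheory GRing.Theory Num.Theory.

Lemma card_le_seqf (n : nat) (A : {set 'I_n}) (s : seq nat) (f : 'I_n -> nat) :
  {in A &, injective f} ->
  (forall v, v \in A -> f v \in s) -> #|A| <= size s.
Proof.
move=> inj H; rewrite cardE -(size_map f); apply: uniq_leq_size.
  rewrite map_inj_in_uniq ?enum_uniq // => x y; rewrite !mem_enum; exact: inj.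
by move=> x /mapP [v]; rewrite mem_enum => /H + ->.
Qed.

Lemma card_le_seq (n : nat) (A : {set 'I_n}) (s : seq nat) :
  (forall v, v \in A -> val v \in s) -> #|A| <= size s.
Proof. apply: card_le_seqf => x y _ _; exact: val_inj. Qed.

Lemma upper (k i j : nat) : ramsey_SP_prop k i j (i + j - 1).
Proof.
move=> e [irr sym] [K [HK HI]].
have hc : #|K| + #|~: K| = i + j - 1 by rewrite cardsC card_ord.
case: (leqP i #|K|) => hKi.
  left; case/card_geqP: hKi => s [us ss hsK].
  exists [set x in s]; split; first by rewrite cardsE (card_uniqP us) ss.
  move=> x; rewrite inE => xs.
  apply: (leq_trans _ (leq0n k)); rewrite leqn0 cards_eq0; apply/eqP/setP => y; rewrite !inE /compl_graph.
  case ys: (y \in s) => //=; case: eqVneq => //= xy.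
  by rewrite HK // hsK.
have hIj : j <= #|~: K| by lia.
right; case/card_geqP: hIj => s [us ss hsK].
exists [set x in s]; split; first by rewrite cardsE (card_uniqP us) ss.
move=> x; rewrite inE => xs.
apply: (leq_trans _ (leq0n k)); rewrite leqn0 cards_eq0; apply/eqP/setP => y; rewrite !inE.
case ys: (y \in s) => //=; apply/negbTE/HI; exact: hsK.
Qed.

Section Lower.
Variables (i j k n : nat).
Hypotheses (hi : k + 3 <= i) (hj : k + 3 <= j)
  (hm : (i - 1) * (k + 1) <= (j - 1) * (i - k - 2)) (hn : n <= i + j - 2).

Definition c := i - 1.
Definition Hb (b a : nat) : bool :=
  a \in [seq (b * (k + 1) + t) %% (j - 1) | t <- iota 0 (k + 1)].

Definition eg : rel 'I_n := fun u v =>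
  (u != v) && [|| (u < c) && (v < c),
                  [&& u < c, c <= v & Hb u (v - c)] |
                  [&& v < c, c <= u & Hb v (u - c)]].

Lemma col_bound (a : nat) :
  #|[set v : 'I_n | (v < c) && Hb v a]| <= i - k - 2.
Proof.
rewrite -(size_iota 0 (i - k - 2)) -(size_map (fun q => (q * (j - 1) + a) %/ (k + 1))).
apply: card_le_seq => v; rewrite inE => /andP [vc /mapP [t]].
rewrite mem_iota add0n => tk ->.
apply/mapP; exists ((v * (k + 1) + t) %/ (j - 1)).
  rewrite mem_iota add0n.
  have := divn_eq (v * (k + 1) + t) (j - 1).
  move: vc; rewrite /c => vc.
  set q := _ %/ _; set r := _ %% _ => E.
  nia.
have k0 : 0 < k + 1 by lia.
rewrite -divn_eq (divnMDl _ _ k0) divn_small ?addn0 //; lia.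
Qed.

Lemma row_bound (b : nat) :
  #|[set v : 'I_n | (c <= v) && ~~ Hb b (v - c)]| <= j - k - 2.
Proof.
have : #|[set v : 'I_n | (c <= v) && ~~ Hb b (v - c)]|
    <= size [seq a <- iota 0 (j - 1) | ~~ Hb b a].
  apply: (@card_le_seqf n _ _ (fun v : 'I_n => v - c)).
    move=> x y; rewrite !inE => /andP [cx _] /andP [cy _] E.
    apply: val_inj; move: E => /= E; lia.
  move=> v; rewrite inE => /andP [cv nH].
  rewrite mem_filter nH mem_iota /=; move: (ltn_ord v); rewrite /c; lia.
move/leq_trans; apply.
have : k + 1 <= count (Hb b) (iota 0 (j - 1)).
  rewrite -size_filter -(size_iota 0 (k + 1))
    -(size_map (fun t => (b * (k + 1) + t) %% (j - 1))).
  apply: uniq_leq_size.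
    rewrite map_inj_in_uniq ?iota_uniq // => x y.
    rewrite !mem_iota !add0n => xk yk /eqP.
    rewrite eqn_modDl !modn_small; [by move/eqP| lia | lia].
  move=> x xin; rewrite mem_filter mem_iota add0n /Hb xin /=.
  move/mapP: xin => [t _ ->]; apply: ltn_pmod; lia.
have -> : size [seq a <- iota 0 (j - 1) | ~~ Hb b a] = count (predC (Hb b)) (iota 0 (j - 1)).
  exact: (size_filter (predC (Hb b))).
have := count_predC (Hb b) (iota 0 (j - 1)); rewrite size_iota.
lia.
Qed.


Lemma eg_simple : simple_graph eg.
Proof.
split; first by move=> x; rewrite /eg eqxx.
move=> x y; rewrite /eg eq_sym.
case: (y != x) => //=.
case: (x < c); case: (y < c); case: (c <= x); case: (c <= y);
  case: (Hb x (y - c)); case: (Hb y (x - c)) => //.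
Qed.

Lemma eg_split : split_graph eg.
Proof.
exists [set v : 'I_n | v < c]; split.
  move=> x y; rewrite !inE => xc yc xy; by rewrite /eg xy xc yc.
move=> x y; rewrite !inE => /negbTE xc /negbTE yc; by rewrite /eg xc yc /= andbF.
Qed.

Lemma no_dense (S : {set 'I_n}) : #|S| = i -> ~ k_dense_set eg k S.
Proof.
move=> hS hd.
pose K := [set v : 'I_n | v < c].
pose A := S :\: K. pose B := S :&: K.
have hAB : #|B| + #|A| = i by rewrite cardsID.
have hK : #|K| <= c.
  rewrite -(size_iota 0 c); apply: card_le_seq => v; rewrite /K inE mem_iota add0n leq0n; exact.
have hB : #|B| <= c by apply: leq_trans hK; apply: subset_leq_card; apply: subsetIr.
have : 0 < #|A| by move: hB; rewrite /c; lia.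
case/card_gt0P => a0 a0A.
have a0S : a0 \in S by move: a0A; rewrite inE => /andP [].
have a0c : (a0 < c) = false by move: a0A; rewrite !inE => /andP [/negbTE].
pose N := [set v : 'I_n | (v < c) && Hb v (a0 - c)].
have hN := col_bound (a0 - c).
have hBN : #|B :&: N| <= i - k - 2.
  by apply: leq_trans hN; apply: subset_leq_card; apply: subsetIr.
have sub : (A :\ a0) :|: (B :\: N) \subset [set y in S | compl_graph eg a0 y].
  apply/subsetP => y; rewrite !inE.
  case/orP => [/and3P [ya0 yK yS] | /and3P [yN yS yK]].
    rewrite yS /compl_graph /eg eq_sym ya0 a0c (negbTE yK) /=.
    done.
  rewrite yS /compl_graph /eg a0c yK /=.
  move: yN; rewrite yK /= => /negbTE ->; rewrite !andbF /= andbT.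
  apply/eqP => E; move: a0c yK; rewrite E => ->; done.
have disj : (A :\ a0) :&: (B :\: N) = set0.
  apply/setP => y; rewrite !inE.
  by case: (y < c); rewrite /= ?andbF.
have h3 : #|(A :\ a0) :|: (B :\: N)| <= k :=
  leq_trans (subset_leq_card sub) (hd a0 a0S).
move: h3.
rewrite cardsU disj cards0 subn0 (cardsD B N).
have := cardsD1 a0 A; rewrite a0A add1n.
have := subset_leq_card (subsetIl B N).
lia.
Qed.

Lemma no_sparse (T : {set 'I_n}) : #|T| = j -> ~ k_sparse_set eg k T.
Proof.
move=> hT hd.
pose K := [set v : 'I_n | v < c].
pose A := T :\: K. pose B := T :&: K.
have hAB : #|B| + #|A| = j by rewrite cardsID.
have hA : #|A| <= j - 1.
  rewrite -(size_iota 0 (j - 1)).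
  apply: (@card_le_seqf n _ _ (fun v : 'I_n => v - c)).
    move=> x y; rewrite !inE => /andP [cx _] /andP [cy _] E.
    apply: val_inj; move: E cx cy => /= E; lia.
  move=> v; rewrite !inE mem_iota => /andP [cv _].
  move: (ltn_ord v) cv; rewrite /c; lia.
have : 0 < #|B| by lia.
case/card_gt0P => b0 b0B.
have b0S : b0 \in T by move: b0B; rewrite inE => /andP [].
have b0c : b0 < c by move: b0B; rewrite !inE => /andP [].
pose N := [set v : 'I_n | (c <= v) && ~~ Hb b0 (v - c)].
have hN := row_bound b0.
have hAN : #|A :&: N| <= j - k - 2.
  by apply: leq_trans hN; apply: subset_leq_card; apply: subsetIr.
have sub : (B :\ b0) :|: (A :\: N) \subset [set y in T | eg b0 y].
  apply/subsetP => y; rewrite !inE.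
  case/orP => [/and3P [yb0 yS yK] | /and3P [yN yK yS]].
    by rewrite yS /eg eq_sym yb0 b0c yK.
  rewrite yS /eg b0c /=.
  have cy : c <= y by rewrite leqNgt.
  move: yN; rewrite cy /= negbK => ->; rewrite orbT andbT.
  apply/eqP => E; move: b0c yK; rewrite E => ->; done.
have disj : (B :\ b0) :&: (A :\: N) = set0.
  apply/setP => y; rewrite !inE.
  by case: (y < c); rewrite /= ?andbF.
have h3 : #|(B :\ b0) :|: (A :\: N)| <= k :=
  leq_trans (subset_leq_card sub) (hd b0 b0S).
move: h3.
rewrite cardsU disj cards0 subn0 (cardsD A N).
have := cardsD1 b0 B; rewrite b0B add1n.
have := subset_leq_card (subsetIl A N).
lia.
Qed.

End Lower.

Theorem theorem6p2 (i j k : nat) :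
  0 < i -> 0 < j ->
  ((k%:Z + 1) ^+ 2 <= (i%:Z - k%:Z - 2) * (j%:Z - k%:Z - 2))%R ->
  is_ramsey_SP k i j (i + j - 1).
Proof.
move=> hi0 hj0; rewrite expr2 => h.
have [[-> ->] | [hi [hj hm]]] :
  (i = 1 /\ j = 1) \/ (k+3 <= i /\ k+3 <= j /\ (i-1)*(k+1) <= (j-1)*(i-k-2)).
  nia.
  split; first exact: upper.
  move=> n; case: n => // P.
  have sg : simple_graph [rel x y : 'I_0 | false] by [].
  have sp : split_graph [rel x y : 'I_0 | false] by exists set0; split => x y; rewrite ?inE.
  case: (P _ sg sp) => [[S [hS _]] | [S [hS _]]];
    by have := subset_leq_card (subsetT S); rewrite hS cardsT card_ord.
split; first exact: upper.
move=> n P; rewrite leqNgt; apply/negP => hn.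
have hn' : n <= i + j - 2 by lia.
case: (P (eg i j k n) (eg_simple i j k n) (eg_split i j k n)).
  by case=> S [hS hd]; exact: (@no_dense i j k n hi hj hm hn' S hS hd).
by case=> T [hT hd]; exact: (@no_sparse i j k n hi hj hm hn' T hT hd).
Qed.
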